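(* For every $n\ge 4$, the number of magic quad squares of type C in the EvenQuads-$2^n$ deck is \[10 + 85(2^n-16) + 43(2^n-16)(2^n-32) + (2^n-16)(2^n-32)(2^n-64).\]
   Context: The EvenQuads-$2^n$ deck consists of $2^n$ cards identified with the integers $0,1,\dots,2^n-1$. Four cards $a,b,c,d$ form a quad if and only if $a\oplus b\oplus c\oplus d=0$, where $\oplus$ is bitwise XOR. A quad square is a $4\times4$ array of $16$ pairwise distinct cards; it is magic if each of its four rows, four columns and two diagonals forms a quad. It is of type C if its first row is $0,1,2,3$ (left to right) and its first column is $0,4,8,12$ (top to bottom). *)

(* Defs.v *)
From Stdlib Require Import PeanoNat.
From mathcomp Require Import all_boot all_order all_algebra.
Set Implicit Arguments. Unset Strict Implicit. Unset Printing Implicit Defensive.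

(* Cards of the EvenQuads-2^n deck: integers 0 .. 2^n - 1, i.e. 'I_(2^n). *)

Definition is_quad (a b c d : nat) : bool :=
  Nat.lxor (Nat.lxor (Nat.lxor a b) c) d == 0.

(* A 4x4 array of cards; entry (i, j) = row i, column j (0-indexed,
   row 0 is the top row, column 0 the leftmost column). *)
Definition ix (k : nat) : 'I_4 := @inord 3 k.

Definition square (n : nat) := {ffun 'I_4 * 'I_4 -> 'I_(2 ^ n)}.

Definition quad_square n (S : square n) : bool := injectiveb S.

Definition row_quad n (S : square n) (i : 'I_4) : bool :=
  is_quad (S (i, ix 0)) (S (i, ix 1)) (S (i, ix 2)) (S (i, ix 3)).
Definition col_quad n (S : square n) (j : 'I_4) : bool :=
  is_quad (S (ix 0, j)) (S (ix 1, j)) (S (ix 2, j)) (S (ix 3, j)).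
Definition diag_quad n (S : square n) : bool :=
  is_quad (S (ix 0, ix 0)) (S (ix 1, ix 1)) (S (ix 2, ix 2)) (S (ix 3, ix 3)).
Definition antidiag_quad n (S : square n) : bool :=
  is_quad (S (ix 0, ix 3)) (S (ix 1, ix 2)) (S (ix 2, ix 1)) (S (ix 3, ix 0)).

Definition magic n (S : square n) : bool :=
  [&& [forall i, row_quad S i], [forall j, col_quad S j],
      diag_quad S & antidiag_quad S].

Definition typeC n (S : square n) : bool :=
  [forall j : 'I_4, (S (ix 0, j) : nat) == j] &&
  [forall i : 'I_4, (S (i, ix 0) : nat) == 4 * i].

Definition magic_typeC_squares n : {set square n} :=
  [set S : square n | [&& quad_square S, magic S & typeC S]].

(* Main.v *)
Require Import Defs.
From Stdlib Require Import PeanoNat.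
From mathcomp Require Import all_boot all_order all_algebra zify ring.

Definition mask := (bool * bool * bool)%type.
Definition sel (b : bool) (x : nat) := if b then x else 0.
Definition LL (m : mask) (x y z : nat) :=
  Nat.lxor (Nat.lxor (sel m.1.1 x) (sel m.1.2 y)) (sel m.2 z).
Definition mxor (m1 m2 : mask) : mask :=
  (xorb m1.1.1 m2.1.1, xorb m1.1.2 m2.1.2, xorb m1.2 m2.2).
Definition entry (i j : nat) : mask * nat :=
  match i, j with
  | 0, 0 => ((false,false,false), 0) | 0, 1 => ((false,false,false), 1)
  | 0, 2 => ((false,false,false), 2) | 0, 3 => ((false,false,false), 3)
  | 1, 0 => ((false,false,false), 4) | 1, 1 => ((true,false,false), 0)
  | 1, 2 => ((false,true,false), 0) | 1, 3 => ((true,true,false), 4)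
  | 2, 0 => ((false,false,false), 8) | 2, 1 => ((false,true,false), 15)
  | 2, 2 => ((false,false,true), 0) | 2, 3 => ((false,true,true), 7)
  | 3, 0 => ((false,false,false), 12) | 3, 1 => ((true,true,false), 14)
  | 3, 2 => ((false,true,true), 2) | _, _ => ((true,false,true), 0)
  end.
Definition ent (e : mask * nat) x y z := Nat.lxor (LL e.1 x y z) e.2.
Definition ents := [seq entry i j | i <- iota 0 4, j <- iota 0 4].
Definition valid x y z := uniq [seq ent e x y z | e <- ents].

Definition T7 := (bool * bool * bool * bool * bool * bool * bool)%type.
Definition patf (t : T7) (m : mask) : bool :=
  let: (t1, t2, t3, t4, t5, t6, t7) := t in
  match m with
  | (false, false, false) => true
  | (true, false, false) => t1
  | (false, true, false) => t2
  | (true, true, false) => t3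
  | (false, false, true) => t4
  | (true, false, true) => t5
  | (false, true, true) => t6
  | (true, true, true) => t7
  end.
Definition pat7 x y z : T7 :=
  (x == 0, y == 0, Nat.lxor x y == 0, z == 0, Nat.lxor x z == 0,
   Nat.lxor y z == 0, Nat.lxor (Nat.lxor x y) z == 0).
Definition Qr (t : T7) (v1 v2 : mask * nat) := ~~ (patf t (mxor v1.1 v2.1) && (v1.2 == v2.2)).
Definition Q (t : T7) x y z :=
  pairwise (Qr t) [seq (e.1, ent e x y z) | e <- ents].
Definition cfun (t : T7) :=
  \sum_(x <- iota 0 16) \sum_(y <- iota 0 16) \sum_(z <- iota 0 16) Q t x y z.

Ltac xsolve :=
  apply Nat.bits_inj; let i := fresh "i" in intro i; rewrite ?Nat.lxor_spec;
  destruct i as [|[|[|[|i]]]]; simpl; rewrite ?Nat.bits_0;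
  repeat match goal with
  | |- context [Nat.odd ?a] =>
      let v := eval vm_compute in (Nat.odd a) in
      match v with
      | true => change (Nat.odd a) with true
      | false => change (Nat.odd a) with false
      end
  end;
  repeat match goal with
  | |- context [Nat.testbit ?a ?j] => destruct (Nat.testbit a j)
  | |- context [Nat.odd ?a] => destruct (Nat.odd a) end; reflexivity.

Lemma test1 (y z : nat) : Nat.lxor (Nat.lxor (Nat.lxor 8 (Nat.lxor y 15)) z) (Nat.lxor (Nat.lxor y z) 7) = 0.
Proof. xsolve. Qed.

Lemma LL_xor m1 m2 x y z : Nat.lxor (LL m1 x y z) (LL m2 x y z) = LL (mxor m1 m2) x y z.
Proof. case: m1 => [[[] []] []]; case: m2 => [[[] []] []]; rewrite /LL /mxor /sel /=; xsolve. Qed.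

Lemma patfE m x y z : (LL m x y z == 0) = patf (pat7 x y z) m.
Proof. case: m => [[[] []] []]; rewrite /LL /sel /= ?Nat.lxor_0_l ?Nat.lxor_0_r //. Qed.

Lemma tb_hi b j : b < 16 -> 4 <= j -> Nat.testbit b j = false.
Proof.
move=> hb hj; rewrite -(Nat.mod_small b (Nat.pow 2 4)); last by apply/ltP.
by apply: Nat.mod_pow2_bits_high; apply/leP.
Qed.

Lemma tbE a b i : b < 16 ->
  Nat.testbit (16 * a + b) i = if i < 4 then Nat.testbit b i else Nat.testbit a (i - 4).
Proof.
move=> hb.
have E : 16 * a + b = Nat.lxor (Nat.mul a (Nat.pow 2 4)) b.
  rewrite -Nat.add_nocarry_lxor; first by rewrite /= mulnC.
  apply Nat.bits_inj => j; rewrite Nat.land_spec Nat.bits_0.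
  case: (ltnP j 4) => hj.
    by rewrite Nat.mul_pow2_bits_low //; apply/ltP.
  rewrite (tb_hi _ _ hb hj); by case: (Nat.testbit _ _).
rewrite E Nat.lxor_spec; case: (ltnP i 4) => hi.
  by rewrite Nat.mul_pow2_bits_low //; apply/ltP.
rewrite Nat.mul_pow2_bits_high; last by apply/leP.
rewrite (tb_hi _ _ hb) //; by case: (Nat.testbit _ _).
Qed.

Lemma pow2E k : 2 ^ k = Nat.pow 2 k.
Proof. elim: k => // k IH; by rewrite expnS IH. Qed.

Lemma log2_lt a k : 0 < k -> a < 2 ^ k -> (Nat.log2 a < k)%coq_nat.
Proof.
move=> hk ha; case: a ha => [|a] ha; first by apply/ltP.
apply Nat.log2_lt_pow2; first by apply/ltP.
by rewrite -pow2E; apply/ltP.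
Qed.

Lemma lxor_lt a b k : a < 2 ^ k -> b < 2 ^ k -> Nat.lxor a b < 2 ^ k.
Proof.
case: k => [|k] ha hb.
  by move: ha hb; rewrite expn0 !ltnS !leqn0 => /eqP -> /eqP ->.
case E: (Nat.lxor a b) => [|m]; first by rewrite expn_gt0.
rewrite -E pow2E; apply/ltP; apply Nat.log2_lt_pow2; first by rewrite E; apply/ltP.
have := Nat.log2_lxor a b.
have la := @log2_lt a k.+1 isT ha.
have lb := @log2_lt b k.+1 isT hb.
lia.
Qed.

Lemma split16 a b c d : b < 16 -> d < 16 ->
  Nat.lxor (16 * a + b) (16 * c + d) = 16 * Nat.lxor a c + Nat.lxor b d.
Proof.
move=> hb hd.
have hbd : Nat.lxor b d < 16. exact: (@lxor_lt b d 4).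
apply Nat.bits_inj => i. rewrite Nat.lxor_spec. rewrite !tbE //. rewrite Nat.lxor_spec.
case: ifP => _; by rewrite ?Nat.lxor_spec.
Qed.

Lemma sel_split b a c : sel b (16 * a + c) = 16 * sel b a + sel b c.
Proof. by case: b; rewrite /= ?muln0. Qed.
Lemma sel_lt b c : c < 16 -> sel b c < 16.
Proof. by case: b. Qed.
Lemma lx16 a b : a < 16 -> b < 16 -> Nat.lxor a b < 16.
Proof. exact: (@lxor_lt a b 4). Qed.

Lemma LL_lt m x y z : x < 16 -> y < 16 -> z < 16 -> LL m x y z < 16.
Proof. by move=> hx hy hz; rewrite /LL !lx16 ?sel_lt. Qed.

Lemma LL_split m xh xl yh yl zh zl : xl < 16 -> yl < 16 -> zl < 16 ->
  LL m (16 * xh + xl) (16 * yh + yl) (16 * zh + zl) = 16 * LL m xh yh zh + LL m xl yl zl.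
Proof.
move=> hx hy hz; rewrite /LL !sel_split split16 ?sel_lt // split16 ?lx16 ?sel_lt //.
Qed.

Lemma ent_split e xh xl yh yl zh zl : e.2 < 16 -> xl < 16 -> yl < 16 -> zl < 16 ->
  ent e (16 * xh + xl) (16 * yh + yl) (16 * zh + zl) = 16 * LL e.1 xh yh zh + ent e xl yl zl.
Proof.
move=> he hx hy hz; rewrite /ent LL_split //.
rewrite -{1}(add0n e.2) -(muln0 16) split16 ?LL_lt // Nat.lxor_0_r //.
Qed.

Lemma ent_lt e x y z : e.2 < 16 -> x < 16 -> y < 16 -> z < 16 -> ent e x y z < 16.
Proof. by move=> he hx hy hz; rewrite /ent lx16 ?LL_lt. Qed.

Lemma eq16 a b c d : b < 16 -> d < 16 -> (16 * a + b == 16 * c + d) = (a == c) && (b == d).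
Proof.
move=> hb hd; apply/idP/idP => [/eqP H|/andP [/eqP -> /eqP ->] //].
apply/andP; split; apply/eqP; lia.
Qed.

Lemma ents_lt : all (fun e : mask * nat => e.2 < 16) ents.
Proof. by []. Qed.

Lemma validE xh xl yh yl zh zl : xl < 16 -> yl < 16 -> zl < 16 ->
  valid (16 * xh + xl) (16 * yh + yl) (16 * zh + zl) = Q (pat7 xh yh zh) xl yl zl.
Proof.
move=> hx hy hz; rewrite /valid /Q uniq_pairwise !pairwise_map.
apply: (eq_in_pairwise (P := fun e : mask * nat => e.2 < 16)); last exact: ents_lt.
move=> e1 e2 h1 h2.
change ((ent e1 (16 * xh + xl) (16 * yh + yl) (16 * zh + zl) !=
         ent e2 (16 * xh + xl) (16 * yh + yl) (16 * zh + zl)) =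
   ~~ (patf (pat7 xh yh zh) (mxor e1.1 e2.1) && (ent e1 xl yl zl == ent e2 xl yl zl))).
rewrite !ent_split // eq16 ?ent_lt //.
congr (~~ (_ && _)); rewrite -patfE -LL_xor.
by apply/eqP/eqP => H; [rewrite H Nat.lxor_nilpotent | exact: Nat.lxor_eq H].
Qed.

Lemma sum_split16 M (f : nat -> nat) :
  \sum_(x <- iota 0 (16 * M)) f x = \sum_(h <- iota 0 M) \sum_(l <- iota 0 16) f (16 * h + l).
Proof.
elim: M => [|M IH]; first by rewrite muln0 !big_nil.
rewrite mulnS addnC (iotaD 0 (16 * M) 16) big_cat IH -(addn1 M) (iotaD 0 M 1) big_cat big_seq1 !add0n.
congr (_ + _); by rewrite -{1}[16 * M]addn0 iotaDl big_map.
Qed.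

Lemma split3 M (g : nat -> nat -> nat -> nat) :
  \sum_(x <- iota 0 (16 * M)) \sum_(y <- iota 0 (16 * M)) \sum_(z <- iota 0 (16 * M)) g x y z =
  \sum_(xh <- iota 0 M) \sum_(yh <- iota 0 M) \sum_(zh <- iota 0 M)
   \sum_(xl <- iota 0 16) \sum_(yl <- iota 0 16) \sum_(zl <- iota 0 16)
     g (16 * xh + xl) (16 * yh + yl) (16 * zh + zl).
Proof.
rewrite sum_split16; apply: eq_bigr => xh _.
under eq_bigr => xl _ do rewrite sum_split16.
rewrite exchange_big; apply: eq_bigr => yh _.
under eq_bigr => xl _ do under eq_bigr => yl _ do rewrite sum_split16.
under eq_bigr => xl _ do rewrite exchange_big.
by rewrite exchange_big.
Qed.

Definition sum3 M (g : nat -> nat -> nat -> nat) :=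
  \sum_(x <- iota 0 M) \sum_(y <- iota 0 M) \sum_(z <- iota 0 M) g x y z.

Lemma total M : sum3 (16 * M) (fun x y z => nat_of_bool (valid x y z)) =
  sum3 M (fun x y z => cfun (pat7 x y z)).
Proof.
rewrite /sum3 split3; apply: eq_bigr => xh _; apply: eq_bigr => yh _; apply: eq_bigr => zh _.
rewrite /cfun big_seq [RHS]big_seq; apply: eq_bigr => xl; rewrite mem_iota => /andP[_ hx].
rewrite big_seq [RHS]big_seq; apply: eq_bigr => yl; rewrite mem_iota => /andP[_ hy].
rewrite big_seq [RHS]big_seq; apply: eq_bigr => zl; rewrite mem_iota => /andP[_ hz].
by rewrite validE.
Qed.

Lemma sum_gen M s (f : nat -> nat) c : uniq s -> all (fun z => z < M) s ->
  (forall z, z < M -> z \notin s -> f z = c) ->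
  \sum_(z <- iota 0 M) f z = \sum_(z <- s) f z + (M - size s) * c.
Proof.
move=> us alls hf.
have P : perm_eq [seq z <- iota 0 M | z \in s] s.
  apply: uniq_perm; [by rewrite filter_uniq ?iota_uniq | done | move=> z].
  rewrite mem_filter mem_iota /=; case: (boolP (z \in s)) => //= zs.
  by move/allP: alls => /(_ z zs) ->.
rewrite (bigID (fun z => z \in s)) /= -big_filter (perm_big _ P); congr (_ + _).
rewrite big_seq_cond (eq_bigr (fun _ => c)); last first.
  by move=> z /andP[]; rewrite mem_iota /= => hz zs; apply: hf.
rewrite -big_seq_cond big_const_seq iter_addn_0 mulnC; congr (_ * _).
have := count_predC (fun z => z \in s) (iota 0 M).
rewrite size_iota -size_filter (perm_size P) => E.
by rewrite -[in RHS]E addKn.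
Qed.

Lemma lx0 a b : (Nat.lxor a b == 0) = (a == b).
Proof. by apply/eqP/eqP => [/Nat.lxor_eq|->]; rewrite ?Nat.lxor_nilpotent. Qed.

Lemma lxK a b : Nat.lxor a (Nat.lxor a b) = b.
Proof. by rewrite -Nat.lxor_assoc Nat.lxor_nilpotent Nat.lxor_0_l. Qed.

Lemma pat7E x y z : pat7 x y z =
  (x == 0, y == 0, x == y, z == 0, z == x, z == y, z == Nat.lxor x y).
Proof. by rewrite /pat7 !lx0 (eq_sym x z) (eq_sym y z) (eq_sym (Nat.lxor x y) z). Qed.

Section Count.
Variable F : T7 -> nat.
Variable k : nat.
Local Notation M := (2 ^ k).
Local Notation t := true.
Local Notation f := false.

Definition eA1 := F (t,t,t,t,t,t,t) + (M - 1) * F (t,t,t,f,f,f,f).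
Definition eA2 := F (t,f,f,t,t,f,f) + F (t,f,f,f,f,t,t) + (M - 2) * F (t,f,f,f,f,f,f).
Definition eB1 := F (f,t,f,t,f,t,f) + F (f,t,f,f,t,f,t) + (M - 2) * F (f,t,f,f,f,f,f).
Definition eB2 := F (f,f,t,t,f,f,t) + F (f,f,t,f,t,t,f) + (M - 2) * F (f,f,t,f,f,f,f).
Definition eB3 := F (f,f,f,t,f,f,f) + F (f,f,f,f,t,f,f) + F (f,f,f,f,f,t,f) + F (f,f,f,f,f,f,t)
   + (M - 4) * F (f,f,f,f,f,f,f).

Lemma Mpos : 0 < M. Proof. by rewrite expn_gt0. Qed.

Lemma inner x y : x < M -> y < M ->
  \sum_(z <- iota 0 M) F (pat7 x y z) =
  if x == 0 then (if y == 0 then eA1 else eA2)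
  else if y == 0 then eB1 else if y == x then eB2 else eB3.
Proof.
move=> hx hy; under eq_bigr do rewrite pat7E.
have M0 := Mpos.
case: (eqVneq x 0) => [->|x0].
  case: (eqVneq y 0) => [->|y0].
    rewrite Nat.lxor_0_l (@sum_gen M [:: 0] _ (F (t,t,t,f,f,f,f))) /=.
    - by rewrite big_seq1 eqxx.
    - by [].
    - by rewrite M0.
    - by move=> z _; rewrite !inE => /negbTE ->.
  rewrite Nat.lxor_0_l (@sum_gen M [:: 0; y] _ (F (t,f,f,f,f,f,f))) /=.
  - by rewrite !big_cons big_nil /eA2 ?(eq_sym 0 x) ?(eq_sym 0 y) ?(negbTE y0) !eqxx ?addn0.
  - by rewrite !inE eq_sym y0.
  - by rewrite M0 hy.
  - by move=> z _; rewrite !inE negb_or => /andP[/negbTE -> /negbTE ->].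
case: (eqVneq y 0) => [->|y0].
  rewrite Nat.lxor_0_r (@sum_gen M [:: 0; x] _ (F (f,t,f,f,f,f,f))) /=.
  - by rewrite !big_cons big_nil /eB1 ?(eq_sym 0 x) ?(eq_sym 0 y) ?(negbTE x0) !eqxx ?addn0.
  - by rewrite !inE eq_sym x0.
  - by rewrite M0 hx.
  - by move=> z _; rewrite !inE negb_or ?(negbTE x0) ?eqxx => /andP[/negbTE -> /negbTE ->].
case: (eqVneq y x) => [->|yx].
  rewrite Nat.lxor_nilpotent (@sum_gen M [:: 0; x] _ (F (f,f,t,f,f,f,f))) /=.
  - by rewrite !big_cons big_nil /eB2 ?(eq_sym 0 x) ?(eq_sym 0 y) ?(negbTE x0) !eqxx ?addn0.
  - by rewrite !inE eq_sym x0.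
  - by rewrite M0 hx.
  - by move=> z _; rewrite !inE negb_or ?(negbTE x0) ?eqxx => /andP[/negbTE -> /negbTE ->].
have w0 : (Nat.lxor x y == 0) = false by rewrite lx0 eq_sym (negbTE yx).
have wx : (Nat.lxor x y == x) = false.
  apply/negbTE/eqP => E; have := f_equal (Nat.lxor x) E; rewrite lxK Nat.lxor_nilpotent => E2.
  by move: y0; rewrite E2 eqxx.
have wy : (Nat.lxor x y == y) = false.
  apply/negbTE/eqP => E; have := f_equal (fun w => Nat.lxor w y) E; rewrite /= Nat.lxor_assoc !Nat.lxor_nilpotent Nat.lxor_0_r => E2.
  by move: x0; rewrite E2 eqxx.
have hw : Nat.lxor x y < M by apply: lxor_lt.
rewrite (@sum_gen M [:: 0; x; y; Nat.lxor x y] _ (F (f,f,f,f,f,f,f))) /=.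
- rewrite !big_cons big_nil /eB3 (eq_sym 0 x) (eq_sym 0 y) (eq_sym 0 (Nat.lxor x y)) (eq_sym x y) (eq_sym x (Nat.lxor x y)) (eq_sym y (Nat.lxor x y)).
  by rewrite (negbTE x0) (negbTE y0) (negbTE yx) w0 wx wy !eqxx addn0 !addnA.
- by rewrite !inE !negb_or (eq_sym 0 x) (eq_sym 0 y) (eq_sym 0 (Nat.lxor x y)) (eq_sym x y) (eq_sym x (Nat.lxor x y)) (eq_sym y (Nat.lxor x y)) x0 y0 yx w0 wx wy.
- by rewrite M0 hx hy hw.
- move=> z _; rewrite !inE !negb_or => /and4P[/negbTE -> /negbTE -> /negbTE -> /negbTE ->].
  by [].
Qed.

Lemma mid x : x < M ->
  \sum_(y <- iota 0 M) \sum_(z <- iota 0 M) F (pat7 x y z) =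
  if x == 0 then eA1 + (M - 1) * eA2 else eB1 + eB2 + (M - 2) * eB3.
Proof.
move=> hx; have M0 := Mpos.
rewrite big_seq (eq_bigr (fun y => if x == 0 then (if y == 0 then eA1 else eA2)
  else if y == 0 then eB1 else if y == x then eB2 else eB3)); last first.
  by move=> y; rewrite mem_iota => /andP[_ hy]; rewrite inner.
rewrite -big_seq; case: (eqVneq x 0) => [_|x0].
  rewrite (@sum_gen M [:: 0] _ eA2) /=.
  - by rewrite big_seq1.
  - by [].
  - by rewrite M0.
  - by move=> y _; rewrite !inE => /negbTE ->.
rewrite (@sum_gen M [:: 0; x] _ eB3) /=.
- by rewrite !big_cons big_nil (negbTE x0) !eqxx addn0.
- by rewrite inE eq_sym x0.
- by rewrite M0 hx.
- by move=> y _; rewrite !inE negb_or => /andP[/negbTE -> /negbTE ->].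
Qed.

Lemma top : sum3 M (fun x y z => F (pat7 x y z)) =
  eA1 + (M - 1) * eA2 + (M - 1) * (eB1 + eB2 + (M - 2) * eB3).
Proof.
have M0 := Mpos.
rewrite /sum3 big_seq (eq_bigr (fun x => if x == 0 then eA1 + (M - 1) * eA2
  else eB1 + eB2 + (M - 2) * eB3)); last first.
  by move=> x; rewrite mem_iota => /andP[_ hx]; rewrite mid.
rewrite -big_seq (@sum_gen M [:: 0] _ (eB1 + eB2 + (M - 2) * eB3)) /=.
- by rewrite big_seq1.
- by [].
- by rewrite M0.
- by move=> y _; rewrite !inE => /negbTE ->.
Qed.
End Count.

Lemma entry_lt i j : (entry i j).2 < 16.
Proof. by case: i => [|[|[|[|i]]]]; case: j => [|[|[|[|j]]]]. Qed.

Lemma quad_d a b c d : is_quad a b c d -> d = Nat.lxor (Nat.lxor a b) c.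
Proof. by move/eqP/Nat.lxor_eq. Qed.

Lemma quad_c a b c d : is_quad a b c d -> c = Nat.lxor (Nat.lxor a b) d.
Proof.
move/eqP => H; apply: Nat.lxor_eq; rewrite -H.
apply Nat.bits_inj => i; rewrite !Nat.lxor_spec.
by case: (Nat.testbit a i); case: (Nat.testbit b i); case: (Nat.testbit c i); case: (Nat.testbit d i).
Qed.

Arguments quad_d {a b c d}.
Arguments quad_c {a b c d}.

Lemma ixK k : k < 4 -> (ix k : nat) = k.
Proof. by move=> hk; rewrite /ix inordK. Qed.

Lemma ordE (o : 'I_4) : o = ix o.
Proof. by apply: ord_inj; rewrite ixK. Qed.

Definition o4 (k : nat) : 'I_4 := @Ordinal 4 (k %% 4) (ltn_pmod k (isT : 0 < 4)).
Definition L4 := [seq (o4 i, o4 j) | i <- iota 0 4, j <- iota 0 4].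
Lemma uL4 : uniq L4. Proof. by []. Qed.
Lemma mL4 p : p \in L4.
Proof. by case: p => [[[|[|[|[|i]]]] Hi] [[|[|[|[|j]]]] Hj]]. Qed.

Lemma injectiveb_L4 (rT : eqType) (f : 'I_4 * 'I_4 -> rT) :
  injectiveb f = uniq [seq f p | p <- L4].
Proof.
rewrite /injectiveb /dinjectiveb; apply: perm_uniq; apply: perm_map.
apply: uniq_perm; [exact: enum_uniq | exact: uL4 | move=> p; by rewrite mem_enum mL4].
Qed.


Lemma solve_square (s : nat -> nat -> nat) :
  s 0 0 = 0 -> s 0 1 = 1 -> s 0 2 = 2 -> s 0 3 = 3 ->
  s 1 0 = 4 -> s 2 0 = 8 -> s 3 0 = 12 ->
  is_quad (s 1 0) (s 1 1) (s 1 2) (s 1 3) ->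
  is_quad (s 2 0) (s 2 1) (s 2 2) (s 2 3) ->
  is_quad (s 3 0) (s 3 1) (s 3 2) (s 3 3) ->
  is_quad (s 0 1) (s 1 1) (s 2 1) (s 3 1) ->
  is_quad (s 0 2) (s 1 2) (s 2 2) (s 3 2) ->
  is_quad (s 0 3) (s 1 2) (s 2 1) (s 3 0) ->
  forall i j, i < 4 -> j < 4 -> s i j = ent (entry i j) (s 1 1) (s 1 2) (s 2 2).
Proof.
move=> h00 h01 h02 h03 h10 h20 h30 r1 r2 r3 c1 c2 ad.
have E13 := quad_d r1; have E21 := quad_c ad; have E23 := quad_d r2.
have E31 := quad_d c1; have E32 := quad_d c2; have E33 := quad_d r3.
rewrite h10 in E13; rewrite h03 h30 in E21; rewrite h20 E21 in E23.
rewrite h01 E21 in E31; rewrite h02 in E32; rewrite h30 E31 E32 in E33.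
move=> i j hi hj.
case: i hi => [|[|[|[|i]]]] hi //; case: j hj => [|[|[|[|j]]]] hj //;
  rewrite ?h00 ?h01 ?h02 ?h03 ?h10 ?h20 ?h30 ?E13 ?E21 ?E23 ?E31 ?E32 ?E33 /ent /LL /sel /=;
  xsolve.
Qed.

Section Squares.
Variable n : nat.
Hypothesis hn : 4 <= n.
Local Notation N := (2 ^ n).

Lemma N16 : 16 <= N.
Proof. by rewrite -[16]/(2 ^ 4) leq_pexp2l. Qed.

Lemma sel_ltN b x : x < N -> sel b x < N.
Proof. by case: b => // _; rewrite expn_gt0. Qed.

Lemma ent_ltN i j x y z : x < N -> y < N -> z < N -> ent (entry i j) x y z < N.
Proof.
move=> hx hy hz; rewrite /ent /LL !lxor_lt ?sel_ltN //.
exact: leq_trans (entry_lt i j) N16.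
Qed.

Definition trip := ('I_N * 'I_N * 'I_N)%type.

Definition build (t : trip) : square n :=
  [ffun p : 'I_4 * 'I_4 => Ordinal (@ent_ltN (val p.1) (val p.2) _ _ _
     (ltn_ord t.1.1) (ltn_ord t.1.2) (ltn_ord t.2))].

Lemma buildE t i j : i < 4 -> j < 4 ->
  val (build t (ix i, ix j)) = ent (entry i j) t.1.1 t.1.2 t.2.
Proof. by move=> hi hj; rewrite ffunE /= !ixK. Qed.


Lemma build_valid t : injectiveb (build t) = valid t.1.1 t.1.2 t.2.
Proof.
rewrite injectiveb_L4 -(map_inj_uniq (@ord_inj N)) /valid.
have -> : ents = [seq entry (val p.1) (val p.2) | p <- L4] by [].
rewrite -!map_comp; congr (uniq _); apply: eq_map => p; by rewrite /= ffunE.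
Qed.

Ltac ordcase i := rewrite (ordE i); case: i => [[|[|[|[|?]]]] ?] //.

Lemma build_in (t : trip) : valid t.1.1 t.1.2 t.2 -> build t \in magic_typeC_squares n.
Proof.
move=> hv; rewrite inE; apply/and3P; split.
- by rewrite /quad_square build_valid.
- apply/and4P; split.
  + apply/forallP => i; rewrite /row_quad.
    ordcase i; rewrite !buildE // /is_quad /ent /LL /sel /=; apply/eqP; xsolve.
  + apply/forallP => i; rewrite /col_quad.
    ordcase i; rewrite !buildE // /is_quad /ent /LL /sel /=; apply/eqP; xsolve.
  + rewrite /diag_quad !buildE // /is_quad /ent /LL /sel /=; apply/eqP; xsolve.
  + rewrite /antidiag_quad !buildE // /is_quad /ent /LL /sel /=; apply/eqP; xsolve.
- apply/andP; split; apply/forallP => i; ordcase i; rewrite buildE // ?ixK // /ent /LL /sel /=;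
  apply/eqP; xsolve.
Qed.

Definition coords (S : square n) : trip := (S (ix 1, ix 1), S (ix 1, ix 2), S (ix 2, ix 2)).

Lemma coordsK S : S \in magic_typeC_squares n -> S = build (coords S).
Proof.
rewrite inE => /and3P[_ /and4P[/forallP Hr /forallP Hc Hd Ha] /andP[/forallP H0 /forallP H1]].
have Hs := @solve_square (fun i j => val (S (ix i, ix j))).
have h0 : forall j, j < 4 -> val (S (ix 0, ix j)) = j.
  by move=> j hj; have := H0 (ix j); rewrite ixK // => /eqP.
have h1 : forall i, i < 4 -> val (S (ix i, ix 0)) = 4 * i.
  by move=> i hi; have := H1 (ix i); rewrite ixK // => /eqP.
have {}Hs := Hs (h0 0 isT) (h0 1 isT) (h0 2 isT) (h0 3 isT) (h1 1 isT) (h1 2 isT) (h1 3 isT)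
  (Hr (ix 1)) (Hr (ix 2)) (Hr (ix 3)) (Hc (ix 1)) (Hc (ix 2)) Ha.
apply/ffunP => p; apply: val_inj.
rewrite (surjective_pairing p) (ordE p.1) (ordE p.2) buildE ?ltn_ord //.
exact: Hs.
Qed.

Lemma A_eq : magic_typeC_squares n = build @: [set t : trip | valid t.1.1 t.1.2 t.2].
Proof.
apply/setP => S; apply/idP/idP.
- move=> HS; apply/imsetP; exists (coords S); last exact: coordsK.
  rewrite inE -build_valid -(coordsK _ HS).
  by move: HS; rewrite inE => /and3P[].
- by case/imsetP => t; rewrite inE => hv ->; apply: build_in.
Qed.

Lemma build_inj : injective build.
Proof.
move=> [[a b] c] [[a' b'] c'] E.
have := congr1 (fun S : square n => (val (S (ix 1, ix 1)), val (S (ix 1, ix 2)), val (S (ix 2, ix 2)))) E.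
rewrite /= !buildE // /ent /LL /sel /= !Nat.lxor_0_r !Nat.lxor_0_l.
by case=> /val_inj -> /val_inj -> /val_inj ->.
Qed.

Lemma ord_iota (h : nat -> nat) : \sum_(x < N) h x = \sum_(x <- iota 0 N) h x.
Proof. have := @big_mkord _ 0 addn N xpredT h. by rewrite /index_iota subn0 => <-. Qed.

Lemma card_A : #|magic_typeC_squares n| = sum3 N (fun x y z => nat_of_bool (valid x y z)).
Proof.
rewrite A_eq card_imset; last exact: build_inj.
rewrite -sum1_card big_mkcond /=.
rewrite (eq_bigr (fun t : trip => nat_of_bool (valid t.1.1 t.1.2 t.2))); last first.
  by move=> t _; rewrite inE; case: (valid _ _ _).
rewrite -(pair_bigA _ (fun (xy : 'I_N * 'I_N) (z : 'I_N) => nat_of_bool (valid xy.1 xy.2 z))) /=.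
rewrite -(pair_bigA _ (fun (x y : 'I_N) => \sum_(z < N) nat_of_bool (valid x y z))) /=.
rewrite /sum3 (ord_iota (fun x => \sum_(y < N) \sum_(z < N) nat_of_bool (valid x y z))).
apply: eq_bigr => x _.
rewrite (ord_iota (fun y => \sum_(z < N) nat_of_bool (valid x y z))).
apply: eq_bigr => y _.
by rewrite (ord_iota (fun z => nat_of_bool (valid x y z))).
Qed.

End Squares.

Local Notation t := true.
Local Notation f := false.
Lemma cv1 : cfun (t,t,t,t,t,t,t) = 10. Proof. rewrite /cfun unlock; by vm_compute. Qed.
Lemma cv2 : cfun (t,t,t,f,f,f,f) = 112. Proof. rewrite /cfun unlock; by vm_compute. Qed.
Lemma cv3 : cfun (t,f,f,t,t,f,f) = 256. Proof. rewrite /cfun unlock; by vm_compute. Qed.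
Lemma cv4 : cfun (t,f,f,f,f,t,t) = 256. Proof. rewrite /cfun unlock; by vm_compute. Qed.
Lemma cv5 : cfun (t,f,f,f,f,f,f) = 1792. Proof. rewrite /cfun unlock; by vm_compute. Qed.
Lemma cv6 : cfun (f,t,f,t,f,t,f) = 112. Proof. rewrite /cfun unlock; by vm_compute. Qed.
Lemma cv7 : cfun (f,t,f,f,t,f,t) = 256. Proof. rewrite /cfun unlock; by vm_compute. Qed.
Lemma cv8 : cfun (f,t,f,f,f,f,f) = 1024. Proof. rewrite /cfun unlock; by vm_compute. Qed.
Lemma cv9 : cfun (f,f,t,t,f,f,t) = 256. Proof. rewrite /cfun unlock; by vm_compute. Qed.
Lemma cv10 : cfun (f,f,t,f,t,t,f) = 112. Proof. rewrite /cfun unlock; by vm_compute. Qed.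
Lemma cv11 : cfun (f,f,t,f,f,f,f) = 1024. Proof. rewrite /cfun unlock; by vm_compute. Qed.
Lemma cv12 : cfun (f,f,f,t,f,f,f) = 1792. Proof. rewrite /cfun unlock; by vm_compute. Qed.
Lemma cv13 : cfun (f,f,f,f,t,f,f) = 1792. Proof. rewrite /cfun unlock; by vm_compute. Qed.
Lemma cv14 : cfun (f,f,f,f,f,t,f) = 1024. Proof. rewrite /cfun unlock; by vm_compute. Qed.
Lemma cv15 : cfun (f,f,f,f,f,f,t) = 2560. Proof. rewrite /cfun unlock; by vm_compute. Qed.
Lemma cv16 : cfun (f,f,f,f,f,f,f) = 4096. Proof. rewrite /cfun unlock; by vm_compute. Qed.

Import GRing.Theory Num.Theory.
Local Open Scope ring_scope.

Theorem mainTheorem8 (n : nat) (hn : (4 <= n)%N) :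
  (#|magic_typeC_squares n|%:Z : int) =
    10 + 85 * ((2 ^ n)%:Z - 16)
       + 43 * ((2 ^ n)%:Z - 16) * ((2 ^ n)%:Z - 32)
       + ((2 ^ n)%:Z - 16) * ((2 ^ n)%:Z - 32) * ((2 ^ n)%:Z - 64).
Proof.
rewrite (@card_A n hn).
have -> : (2 ^ n = 16 * 2 ^ (n - 4))%N by rewrite -[16%N]/(2 ^ 4)%N -expnD subnKC.
rewrite total (top cfun (n - 4)) /eA1 /eA2 /eB1 /eB2 /eB3.
rewrite cv1 cv2 cv3 cv4 cv5 cv6 cv7 cv8 cv9 cv10 cv11 cv12 cv13 cv14 cv15 cv16.
move: (n - 4)%N => k.
case: k => [|[|k]]; first by [].
  by [].
have [Q ->] : exists Q, (2 ^ k.+2 = 4 * Q + 4)%N.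
  exists (2 ^ k - 1)%N; have P0 : (0 < 2 ^ k)%N by rewrite expn_gt0.
  rewrite !expnS; lia.
have -> : (4 * Q + 4 - 1 = 4 * Q + 3)%N by lia.
have -> : (4 * Q + 4 - 2 = 4 * Q + 2)%N by lia.
have -> : (4 * Q + 4 - 4 = 4 * Q)%N by lia.
rewrite !PoszD !PoszM.
ring.
Qed.
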